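(* Let $A\in\mathbb{R}^{m\times n}$, $b\in\mathbb{R}^m$, $C\in\mathbb{R}^{p\times n}$, $d\in\mathbb{R}^p$ and let $\mathcal{Y}\subseteq\mathbb{R}^n$ be a polyhedral set, and assume the polyhedral set $\mathcal{X}^*=\{x\in\mathcal{Y}:Ax=b,\ Cx\le d\}$ is nonempty. Let $\delta\in(0,2)$, $\beta\in(0,2)$, $x_0\in\mathcal{Y}$, and let $x_k$ be generated by algorithm SSP-LS described in the context. Then for all $k\ge0$, $$\mathbb{E}[\mathrm{dist}^2(x_k,\mathcal{X}^* )]\le\Big(1-\frac1c\min\Big(\frac{\delta(2-\delta)}{2\kappa_{\mathrm{block}}^2},\ \frac{2-\delta}{4\delta},\ \frac{\beta(2-\beta)}{2}\Big)\Big)^k\mathrm{dist}^2(x_0,\mathcal{X}^* ).$$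
   Context: The rows of $A$ (with $b$) are partitioned into blocks $(A_\zeta^T,b_\zeta)$, $\zeta\in\Omega_1$, so $A_\zeta^T$ is a block of rows of $A$; the rows of $C$ (with $d$) are partitioned into blocks $(C_\xi^T,d_\xi)$, $\xi\in\Omega_2$. $\mathbf{P}_1$, $\mathbf{P}_2$ are probability distributions on the (finite) block index sets $\Omega_1$, $\Omega_2$. Define $\mathcal{A}_\zeta=\{x:A_\zeta^Tx=b_\zeta\}$ and $\mathcal{C}_\xi=\{x:C_\xi^Tx\le d_\xi\}$, so $\mathcal{X}^*=\mathcal{Y}\cap\bigcap_\zeta\mathcal{A}_\zeta\cap\bigcap_\xi\mathcal{C}_\xi$. $\Pi_S$ denotes Euclidean projection onto a closed convex set $S$, $\mathrm{dist}$ the Euclidean distance. The constant $c\in(0,\infty)$ is a Hoffman constant: $\mathrm{dist}^2(u,\mathcal{X}^* )\le c\,\mathbb{E}_{\zeta\sim\mathbf{P}_1,\xi\sim\mathbf{P}_2}[\mathrm{dist}^2(u,\mathcal{A}_\zeta)+\mathrm{dist}^2(u,\mathcal{C}_\xi)]$ for all $u\in\mathcal{Y}$ (such $c$ exists since $\mathcal{X}^*$ is a nonempty polyhedron). The maximum block condition number is $\kappa_{\mathrm{block}}=\max_{\zeta}\|A_\zeta^T\|\cdot\|(A_\zeta^T)^\dagger\|$, the maximum over blocks $\zeta$ in the support of $\mathbf{P}_1$, with $\dagger$ the Moore–Penrose pseudoinverse and $\|\cdot\|$ the spectral norm. Algorithm SSP-LS: for $k\ge0$, sample $\zeta_k\sim\mathbf{P}_1$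 and $\xi_k\sim\mathbf{P}_2$ independently of each other and of the past, and set $\alpha_k=\delta\frac{\|A_{\zeta_k}^Tx_k-b_{\zeta_k}\|^2}{\|A_{\zeta_k}(A_{\zeta_k}^Tx_k-b_{\zeta_k})\|^2}$ (with $0/0=0$), $v_k=x_k-\alpha_kA_{\zeta_k}(A_{\zeta_k}^Tx_k-b_{\zeta_k})$, $z_k=(1-\beta)v_k+\beta\Pi_{\mathcal{C}_{\xi_k}}(v_k)$, $x_{k+1}=\Pi_{\mathcal{Y}}(z_k)$. *)

(* Defs.v *)
From HB Require Import structures.
From mathcomp Require Import all_boot all_order all_algebra.
From mathcomp Require Import boolp classical_sets reals.
Set Implicit Arguments. Unset Strict Implicit. Unset Printing Implicit Defensive.
Import Order.TTheory GRing.Theory Num.Theory.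
Local Open Scope classical_set_scope.
Local Open Scope ring_scope.

Section Defs.
Variable R : realType.

Definition sqn {k : nat} (v : 'cV[R]_k) : R := \sum_i (v i 0) ^+ 2.
Definition enorm {k : nat} (v : 'cV[R]_k) : R := Num.sqrt (sqn v).

Definition dist2 {n : nat} (u : 'cV[R]_n) (S : set 'cV[R]_n) : R :=
  inf [set sqn (u - s) | s in S].

Definition proj {n : nat} (S : set 'cV[R]_n) (v : 'cV[R]_n) : 'cV[R]_n :=
  xget 0 (fun y => S y /\ forall s, S s -> sqn (v - y) <= sqn (v - s)).

Definition polyhedral {n : nat} (Y : set 'cV[R]_n) : Prop :=
  exists (q : nat) (G : 'M[R]_(q, n)) (h : 'cV[R]_q),
    Y = [set x | forall i, (G *m x) i 0 <= h i 0].

Definition opnorm {p q : nat} (M : 'M[R]_(p, q)) : R :=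
  sup [set enorm (M *m v) | v in [set v : 'cV[R]_q | enorm v <= 1]].

Definition is_MP_pinv {p q : nat} (M : 'M[R]_(p, q)) (X : 'M[R]_(q, p)) : Prop :=
  [/\ M *m X *m M = M, X *m M *m X = X,
      (M *m X)^T = M *m X & (X *m M)^T = X *m M].
Definition pinv {p q : nat} (M : 'M[R]_(p, q)) : 'M[R]_(q, p) :=
  xget 0 (is_MP_pinv M).

Variables (m n p : nat) (Om1 Om2 : finType).
Variables (A : 'M[R]_(m, n)) (b : 'cV[R]_m) (C : 'M[R]_(p, n)) (d : 'cV[R]_p).
(* row partitions: row i of (A,b) belongs to block blk1 i; row i of (C,d) to blk2 i *)
Variables (blk1 : 'I_m -> Om1) (blk2 : 'I_p -> Om2).

(* block zeta of A (rows not in the block replaced by zero rows) *)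
Definition Ablk (z : Om1) : 'M[R]_(m, n) :=
  \matrix_(i, j) (if blk1 i == z then A i j else 0).
Definition bblk (z : Om1) : 'cV[R]_m :=
  \col_i (if blk1 i == z then b i 0 else 0).

Definition Aset (z : Om1) : set 'cV[R]_n := [set x | Ablk z *m x = bblk z].
Definition Cset (xi : Om2) : set 'cV[R]_n :=
  [set x | forall i, blk2 i = xi -> (C *m x) i 0 <= d i 0].

Definition Xstar (Y : set 'cV[R]_n) : set 'cV[R]_n :=
  [set x | Y x /\ A *m x = b /\ forall i, (C *m x) i 0 <= d i 0].

Definition kappa_block (P1 : Om1 -> R) : R :=
  \big[Num.max/0]_(z | 0 < P1 z) (opnorm (Ablk z) * opnorm (pinv (Ablk z))).

Definition ssp_step (Y : set 'cV[R]_n) (delta beta : R) (z : Om1) (xi : Om2)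
    (x : 'cV[R]_n) : 'cV[R]_n :=
  let r := Ablk z *m x - bblk z in
  let g := (Ablk z)^T *m r in
  let alpha := delta * sqn r / sqn g in   (* x / 0 = 0 in MathComp *)
  let v := x - alpha *: g in
  let zz := (1 - beta) *: v + beta *: proj (Cset xi) v in
  proj Y zz.

(* Expected squared distance E[dist^2(x_k, Xstar)] of the k-th iterate started at x,
   for i.i.d. samples zeta_k ~ P1, xi_k ~ P2 independent of each other *)
Fixpoint exp_dist2 (Y : set 'cV[R]_n) (delta beta : R) (P1 : Om1 -> R) (P2 : Om2 -> R)
    (k : nat) (x : 'cV[R]_n) : R :=
  match k with
  | 0 => dist2 x (Xstar Y)
  | k'.+1 => \sum_(z : Om1) \sum_(xi : Om2)
               P1 z * P2 xi * exp_dist2 Y delta beta P1 P2 k' (ssp_step Y delta beta z xi x)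
  end.

(* the rate constant min(...) ; if kappa_block = 0 the first term is +infinity *)
Definition rate_min (P1 : Om1 -> R) (delta beta : R) : R :=
  let kap := kappa_block P1 in
  let rest := Num.min ((2 - delta) / (4 * delta)) (beta * (2 - beta) / 2) in
  if kap == 0 then rest
  else Num.min (delta * (2 - delta) / (2 * kap ^+ 2)) rest.

End Defs.

(* Main.v *)
Require Import Defs.
From HB Require Import structures.
From mathcomp Require Import all_boot all_order all_algebra.
From mathcomp Require Import boolp classical_sets reals.
From mathcomp Require Import ring lra.
Set Implicit Arguments. Unset Strict Implicit. Unset Printing Implicit Defensive.
Import Order.TTheory GRing.Theory Num.Theory.
Local Open Scope classical_set_scope.
Local Open Scope ring_scope.

Section Vec.
Variable R : realType.

Definition dot {k : nat} (u w : 'cV[R]_k) : R := \sum_i u i 0 * w i 0.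

Lemma sqnE k (v : 'cV[R]_k) : sqn v = dot v v.
Proof. by apply: eq_bigr => i _; rewrite expr2. Qed.

Lemma dotC k (u w : 'cV[R]_k) : dot u w = dot w u.
Proof. by apply: eq_bigr => i _; rewrite mulrC. Qed.

Lemma dotDl k (u v w : 'cV[R]_k) : dot (u + v) w = dot u w + dot v w.
Proof. by rewrite /dot -big_split; apply: eq_bigr => i _; rewrite !mxE mulrDl. Qed.

Lemma dotNl k (u w : 'cV[R]_k) : dot (- u) w = - dot u w.
Proof. by rewrite /dot -sumrN; apply: eq_bigr => i _; rewrite !mxE mulNr. Qed.

Lemma dotBl k (u v w : 'cV[R]_k) : dot (u - v) w = dot u w - dot v w.
Proof. by rewrite dotDl dotNl. Qed.

Lemma dotZl k a (u w : 'cV[R]_k) : dot (a *: u) w = a * dot u w.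
Proof. by rewrite /dot mulr_sumr; apply: eq_bigr => i _; rewrite !mxE mulrA. Qed.

Lemma dotDr k (u v w : 'cV[R]_k) : dot w (u + v) = dot w u + dot w v.
Proof. by rewrite dotC dotDl !(dotC w). Qed.
Lemma dotNr k (u w : 'cV[R]_k) : dot w (- u) = - dot w u.
Proof. by rewrite dotC dotNl dotC. Qed.
Lemma dotBr k (u v w : 'cV[R]_k) : dot w (u - v) = dot w u - dot w v.
Proof. by rewrite dotC dotBl !(dotC w). Qed.
Lemma dotZr k a (u w : 'cV[R]_k) : dot w (a *: u) = a * dot w u.
Proof. by rewrite dotC dotZl dotC. Qed.

Lemma dot0l k (w : 'cV[R]_k) : dot 0 w = 0.
Proof. by rewrite /dot big1 // => i _; rewrite mxE mul0r. Qed.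

Lemma sqn_ge0 k (v : 'cV[R]_k) : 0 <= sqn v.
Proof. by apply: sumr_ge0 => i _; rewrite sqr_ge0. Qed.

Lemma sqn_eq0 k (v : 'cV[R]_k) : sqn v = 0 -> v = 0.
Proof.
move=> /eqP; rewrite psumr_eq0 => [/allP H|i _]; last by rewrite sqr_ge0.
apply/matrixP => i j; rewrite (ord1 j) mxE.
by have /(_ (mem_index_enum i)) := H i; rewrite /= sqrf_eq0 => /eqP.
Qed.

Lemma sqn_coord k (v : 'cV[R]_k) i : v i 0 ^+ 2 <= sqn v.
Proof.
rewrite /sqn (bigD1 i) //= lerDl; apply: sumr_ge0 => j _; exact: sqr_ge0.
Qed.

Lemma dot_tr k l (M : 'M[R]_(k, l)) u w : dot (M *m u) w = dot u (M^T *m w).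
Proof.
rewrite /dot.
under eq_bigr => i _ do rewrite mxE big_distrl /=.
rewrite exchange_big /=; apply: eq_bigr => j _.
rewrite mxE big_distrr /=; apply: eq_bigr => i _; rewrite mxE; ring.
Qed.

Lemma sqnD k (u w : 'cV[R]_k) : sqn (u + w) = sqn u + 2 * dot u w + sqn w.
Proof. rewrite !sqnE !dotDl !dotDr (dotC w u); ring. Qed.
Lemma sqnB k (u w : 'cV[R]_k) : sqn (u - w) = sqn u - 2 * dot u w + sqn w.
Proof. rewrite !sqnE !dotBl !dotBr (dotC w u); ring. Qed.
Lemma sqnZ k a (u : 'cV[R]_k) : sqn (a *: u) = a ^+ 2 * sqn u.
Proof. rewrite !sqnE dotZl dotZr; ring. Qed.
Lemma sqnN k (u : 'cV[R]_k) : sqn (- u) = sqn u.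
Proof. rewrite !sqnE dotNl dotNr; ring. Qed.

Lemma CS k (u w : 'cV[R]_k) : dot u w ^+ 2 <= sqn u * sqn w.
Proof.
have [w0|wn0] := eqVneq (sqn w) 0.
  by rewrite w0 (sqn_eq0 w0) dotC dot0l mulr0 expr0n.
have wp : 0 < sqn w by rewrite lt_def wn0 sqn_ge0.
have := sqn_ge0 (u - (dot u w / sqn w) *: w).
rewrite sqnB sqnZ dotZr => H.
have e : dot u w ^+ 2 = sqn w * (dot u w / sqn w * dot u w) by field.
rewrite e -subr_ge0 -[X in X - _]mulrC -mulrBr pmulr_rge0 //.
move: H; set t := dot u w / sqn w.
have -> : sqn u - 2 * (t * dot u w) + t ^+ 2 * sqn w = sqn u - t * dot u w.
  rewrite /t; field; by [].
by [].
Qed.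

End Vec.

Section Op.
Variable R : realType.

Lemma enorm_sqr k (v : 'cV[R]_k) : enorm v ^+ 2 = sqn v.
Proof. by rewrite /enorm sqr_sqrtr // sqn_ge0. Qed.

Lemma enorm_ge0 k (v : 'cV[R]_k) : 0 <= enorm v.
Proof. exact: sqrtr_ge0. Qed.

Lemma opnorm_has_sup a b (M : 'M[R]_(a, b)) :
  has_sup [set enorm (M *m v) | v in [set v : 'cV[R]_b | enorm v <= 1]].
Proof.
split.
  exists (enorm (M *m 0)), 0 => //=.
  by rewrite /enorm /sqn big1 ?sqrtr0 // => i _; rewrite mxE expr0n.
exists (Num.sqrt (\sum_i (\sum_j `|M i j|) ^+ 2)) => _ [v /= hv <-].
apply: ler_wsqrtr; rewrite /sqn; apply: ler_sum => i _.
have sv : sqn v <= 1.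
  by rewrite -enorm_sqr; have := enorm_ge0 v; move: hv; nra.
have hj : forall j, `|v j 0| <= 1.
  move=> j; have := sqn_coord v j; rewrite -real_normK ?num_real //.
  by move: sv; have := normr_ge0 (v j 0); nra.
have h1 : `|(M *m v) i 0| <= \sum_j `|M i j|.
  rewrite mxE; apply: le_trans (ler_norm_sum _ _ _) _.
  apply: ler_sum => j _; rewrite normrM.
  by have := hj j; have := normr_ge0 (M i j); have := normr_ge0 (v j 0); nra.
rewrite -real_normK ?num_real //.
by move: h1; have := normr_ge0 ((M *m v) i 0); nra.
Qed.

Lemma opnorm_ge_elt a b (M : 'M[R]_(a, b)) v : enorm v <= 1 -> enorm (M *m v) <= opnorm M.
Proof.
move=> hv; apply: (sup_upper_bound (opnorm_has_sup M)); by exists v.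
Qed.

Lemma opnorm_ge0 a b (M : 'M[R]_(a, b)) : 0 <= opnorm M.
Proof.
apply: le_trans (opnorm_ge_elt M (v := 0) _); first exact: enorm_ge0.
by rewrite /enorm /sqn big1 ?sqrtr0 // => i _; rewrite mxE expr0n.
Qed.

Lemma opnorm_bound a b (M : 'M[R]_(a, b)) v :
  sqn (M *m v) <= opnorm M ^+ 2 * sqn v.
Proof.
have [v0|vn0] := eqVneq (sqn v) 0.
  by rewrite v0 mulr0 (sqn_eq0 v0) mulmx0 /sqn big1 // => i _; rewrite mxE expr0n.
have vp : 0 < sqn v by rewrite lt_def vn0 sqn_ge0.
set s := enorm v.
have s2 : s ^+ 2 = sqn v by exact: enorm_sqr.
have sp : 0 < s by rewrite lt_def enorm_ge0 andbT; apply/eqP => s0; move: s2; rewrite s0 expr0n => /esym /eqP; rewrite (negbTE vn0).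
have hw : enorm (s^-1 *: v) <= 1.
  rewrite /enorm sqnZ -s2 exprVn mulVf ?sqrtr1 //.
  by rewrite expf_neq0 // gt_eqF.
have := opnorm_ge_elt M hw.
rewrite -scalemxAr => h.
have h2 : sqn (s^-1 *: (M *m v)) <= opnorm M ^+ 2.
  rewrite -enorm_sqr; have := enorm_ge0 (s^-1 *: (M *m v)); move: h; nra.
move: h2; rewrite sqnZ exprVn s2 => h2.
have := sqn_ge0 (M *m v); have := opnorm_ge0 M.
rewrite -(ler_pM2l vp) in h2 *; move: h2; rewrite mulrA mulfV ?mul1r; last by rewrite gt_eqF.
by move=> h2 _ _; rewrite mulrC.
Qed.

End Op.

Section MP.
Variable R : realType.

Lemma rowsq0 k (w : 'rV[R]_k) : w *m w^T = 0 -> w = 0.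
Proof.
move=> h; apply: trmx_inj; rewrite trmx0; apply: sqn_eq0.
have := congr1 (fun N : 'M[R]_1 => N 0 0) h; rewrite !mxE => <-.
by apply: eq_bigr => j _; rewrite !mxE expr2.
Qed.

Lemma gram_unit a r (F : 'M[R]_(a, r)) : row_free F^T -> (F^T *m F) \in unitmx.
Proof.
move=> fr; rewrite -row_free_unit; apply: inj_row_free => v hv.
have w0 : (v *m F^T) *m (v *m F^T)^T = 0.
  by rewrite trmx_mul trmxK mulmxA -(mulmxA v) hv mul0mx.
have := rowsq0 w0 => /eqP; rewrite mulmx_free_eq0 //; exact/eqP.
Qed.

Lemma pinv_factor a r b (F : 'M[R]_(a, r)) (G : 'M[R]_(r, b)) :
  (F^T *m F) \in unitmx -> (G *m G^T) \in unitmx ->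
  is_MP_pinv (F *m G) (G^T *m invmx (G *m G^T) *m invmx (F^T *m F) *m F^T).
Proof.
move=> uF uG.
set iF := invmx (F^T *m F); set iG := invmx (G *m G^T).
have hF : iF *m (F^T *m F) = 1%:M by rewrite mulVmx.
have hG : (G *m G^T) *m iG = 1%:M by rewrite mulmxV.
have tF : iF^T = iF by rewrite /iF trmx_inv trmx_mul trmxK.
have tG : iG^T = iG by rewrite /iG trmx_inv trmx_mul trmxK.
have MX : (F *m G) *m (G^T *m iG *m iF *m F^T) = F *m iF *m F^T.
  by rewrite !mulmxA -(mulmxA F G) -(mulmxA F) hG mulmx1.
have XM : (G^T *m iG *m iF *m F^T) *m (F *m G) = G^T *m iG *m G.
  by rewrite -!mulmxA (mulmxA F^T) (mulmxA iF) hF mul1mx.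
split.
- by rewrite MX !mulmxA -(mulmxA _ F^T) -(mulmxA _ iF) hF mulmx1.
- rewrite XM !mulmxA -(mulmxA (G^T *m iG) G G^T) -(mulmxA (G^T *m iG) (G *m G^T) iG).
  by rewrite hG mulmx1.
- have -> : F *m G *m (G^T *m iG *m iF *m F^T) = F *m iF *m F^T by exact: MX.
  by rewrite !trmx_mul trmxK tF mulmxA.
- have -> : G^T *m iG *m iF *m F^T *m (F *m G) = G^T *m iG *m G by exact: XM.
  by rewrite !trmx_mul trmxK tG mulmxA.
Qed.

Lemma pinv_exists a b (M : 'M[R]_(a, b)) : exists X, is_MP_pinv M X.
Proof.
have uF : ((col_base M)^T *m col_base M) \in unitmx.
  by apply: gram_unit; rewrite /row_free mxrank_tr; exact: col_base_full.
have uG : ((row_base M)^T^T *m (row_base M)^T) \in unitmx.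
  by apply: gram_unit; rewrite trmxK; exact: row_base_free.
rewrite trmxK in uG.
have := pinv_factor uF uG; rewrite mulmx_base => h; by eexists; exact: h.
Qed.

Lemma pinvP a b (M : 'M[R]_(a, b)) : is_MP_pinv M (pinv M).
Proof. by have [X hX] := pinv_exists M; exact: (xgetI 0 hX). Qed.

End MP.

Section Proj.
Variable R : realType.

Definition qq (k : nat) : R := (k.+1%:R)^-1.

Lemma qq_gt0 k : 0 < qq k.
Proof. by rewrite /qq invr_gt0 ltr0n. Qed.

Lemma qq_le1 k : qq k <= 1.
Proof. by rewrite /qq invr_le1 ?ler1n ?unitfE ?pnatr_eq0 ?ltr0n. Qed.

Lemma vanish (K a : R) : (forall k, a <= K * qq k) -> a <= 0.
Proof.
move=> h; rewrite leNgt; apply/negP => a0.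
have K0 : 0 < K.
  have := h 0%N; have := qq_gt0 0; move: a0; nra.
set k := Num.Def.trunc (K / a).
have hk := truncnS_gt (K / a).
have := h k; rewrite /qq -/k.
have kp : 0 < k.+1%:R :> R by rewrite ltr0n.
rewrite ler_pdivlMr // => hh.
move: hk; rewrite ltr_pdivrMr // => hk.
move: hh hk; rewrite -/k [_ * a]mulrC => h1 h2; by have := lt_le_trans h2 h1; rewrite ltxx.
Qed.

Lemma poly_convex n (S : set 'cV[R]_n) s t (l : R) :
  polyhedral S -> S s -> S t -> 0 <= l <= 1 -> S ((1 - l) *: s + l *: t).
Proof.
case=> q [G [h ->]] /= hs ht /andP[l0 l1] i.
have := hs i; have := ht i; rewrite mulmxDr -!scalemxAr.
move: (G *m s) (G *m t) => gs gt; rewrite !mxE; nra.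
Qed.

Lemma proj_exists n (S : set 'cV[R]_n) (v : 'cV[R]_n) :
  polyhedral S -> S !=set0 ->
  exists p, S p /\ forall s, S s -> sqn (v - p) <= sqn (v - s).
Proof.
move=> hS [s0 Ss0].
set E := [set sqn (v - s) | s in S].
have hE : has_inf E.
  split; first by exists (sqn (v - s0)), s0.
  by exists 0 => _ [s _ <-]; exact: sqn_ge0.
set D := inf E.
have D0 : 0 <= D.
  by apply: lb_le_inf; [exists (sqn (v - s0)), s0 | move=> _ [s _ <-]; exact: sqn_ge0].
have hk : forall k, exists s, S s /\ sqn (v - s) < D + qq k ^+ 2.
  move=> k; have [e [s Ss <-] hs] := inf_adherent (exprn_gt0 2 (qq_gt0 k)) hE.
  by exists s.
have [sk hsk] := choice hk.
have pw : forall k l, sqn (sk k - sk l) <= 2 * qq k ^+ 2 + 2 * qq l ^+ 2.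
  move=> k l; have [Sk lk] := hsk k; have [Sl ll] := hsk l.
  have Sm := poly_convex (l := 2^-1) hS Sk Sl.
  have Sm' : S ((1 - 2^-1) *: sk k + 2^-1 *: sk l).
    by apply: Sm; rewrite invr_ge0 ler0n /= invf_le1 ?ler1n ?ltr0n.
  have Dm : D <= sqn (v - ((1 - 2^-1) *: sk k + 2^-1 *: sk l)).
    by apply: (ge_inf hE.2); exists ((1 - 2^-1) *: sk k + 2^-1 *: sk l).
  have eqd : sqn (sk k - sk l) + 4 * sqn (v - ((1 - 2^-1) *: sk k + 2^-1 *: sk l))
            = 2 * sqn (v - sk k) + 2 * sqn (v - sk l).
    rewrite /sqn !mulr_sumr -!big_split; apply: eq_bigr => i _ /=; rewrite !mxE; field; by [].
  move: eqd Dm lk ll; lra.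
set f := fun k => 2 * qq k.
have cw : forall j k l, `|sk k j 0 - sk l j 0| <= f k + f l.
  move=> j k l; have := pw k l.
  have := sqn_coord (sk k - sk l) j; rewrite !mxE => h1 h2.
  have h3 : `|sk k j 0 - sk l j 0| ^+ 2 <= (f k + f l) ^+ 2.
    rewrite real_normK ?num_real // /f; have := qq_gt0 k; have := qq_gt0 l; move: h1 h2; nra.
  have fp : 0 <= f k + f l by rewrite /f; have := qq_gt0 k; have := qq_gt0 l; lra.
  by move: h3 fp; have := normr_ge0 (sk k j 0 - sk l j 0); nra.
set L := fun j => sup [set sk k j 0 - f k | k in [set: nat]].
have hL : forall j k, `|sk k j 0 - L j| <= f k.
  move=> j k.
  have hs : has_sup [set sk k j 0 - f k | k in [set: nat]].
    split; first by exists (sk 0%N j 0 - f 0%N), 0%N.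
    exists (sk 0%N j 0 + f 0%N) => _ [l _ <-].
    by have := cw j l 0%N; rewrite ler_norml; lra.
  have u1 : sk k j 0 - f k <= L j by apply: (sup_upper_bound hs); exists k.
  have u2 : L j <= sk k j 0 + f k.
    apply: ge_sup; first by exists (sk 0%N j 0 - f 0%N), 0%N.
    by move=> _ [l _ <-]; have := cw j l k; rewrite ler_norml; lra.
  by rewrite ler_norml; lra.
set ps := \col_j L j.
have Sps : S ps.
  move: hS => [q [G [h eS]]]; rewrite eS /= => i.
  have Sk : forall k, (G *m sk k) i 0 <= h i 0.
    by move=> k; have [+ _] := hsk k; rewrite eS /=; apply.
  rewrite -subr_le0; apply: (@vanish (2 * \sum_j `|G i j|)) => k.
  apply: le_trans (_ : (G *m ps) i 0 - (G *m sk k) i 0 <= _).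
    by have := Sk k; lra.
  rewrite !mxE -sumrB mulrAC mulr_sumr; apply: ler_sum => j _.
  rewrite -mulrBr; apply: le_trans (ler_norm _) _; rewrite normrM mulrC.
  apply: ler_wpM2r; first exact: normr_ge0.
  by rewrite mxE distrC; have := hL j k; rewrite /f.
exists ps; split => // s Ss.
suff : sqn (v - ps) <= D by move=> h; apply: le_trans h _; apply: (ge_inf hE.2); exists s.
rewrite -subr_le0; apply: (@vanish (1 + 4 * (n%:R + D + 1) + 4 * n%:R)) => k.
have [_ hk1] := hsk k.
set w := v - sk k; set dl := sk k - ps.
have e : v - ps = w + dl by rewrite /w /dl addrA subrK.
rewrite e sqnD.
have q0 := qq_gt0 k; have q1 := qq_le1 k.
have hw : sqn w <= D + qq k by move: hk1; rewrite -/w; nra.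
have hd : forall j, `|dl j 0| <= 2 * qq k.
  by move=> j; rewrite /dl !mxE; have := hL j k; rewrite /f.
have h1 : dot w dl <= (n%:R + sqn w) * (2 * qq k).
  have -> : n%:R = \sum_(j < n) (1 : R) by rewrite sumr_const card_ord.
  rewrite /dot /sqn -big_split mulr_suml /=.
  apply: ler_sum => j _.
  apply: le_trans (ler_norm _) _; rewrite normrM.
  have := hd j; have := normr_ge0 (w j 0); have := normr_ge0 (dl j 0).
  have : `|w j 0| <= 1 + w j 0 ^+ 2.
    by rewrite -real_normK ?num_real //; have := normr_ge0 (w j 0); nra.
  nra.
have h2 : sqn dl <= n%:R * 4 * qq k.
  have -> : n%:R = \sum_(j < n) (1 : R) by rewrite sumr_const card_ord.
  rewrite /sqn !mulr_suml; apply: ler_sum => j _.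
  rewrite -real_normK ?num_real //; have := hd j; have := normr_ge0 (dl j 0); nra.
have := sqn_ge0 w.
move: hw h1 h2 D0; nra.
Qed.

Lemma projP n (S : set 'cV[R]_n) (v : 'cV[R]_n) :
  polyhedral S -> S !=set0 ->
  S (proj S v) /\ forall s, S s -> sqn (v - proj S v) <= sqn (v - s).
Proof.
move=> hS hne; have [p hp] := proj_exists v hS hne.
exact: (@xgetI _ 0 (fun y => S y /\ forall s, S s -> sqn (v - y) <= sqn (v - s)) p hp).
Qed.

Lemma proj_obtuse n (S : set 'cV[R]_n) (v y : 'cV[R]_n) :
  polyhedral S -> S !=set0 -> S y ->
  dot (v - proj S v) (y - proj S v) <= 0.
Proof.
move=> hS hne Sy; have [Sp hp] := projP v hS hne.
set p := proj S v in Sp hp *.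
set a := dot (v - p) (y - p); set bb := sqn (y - p).
rewrite leNgt; apply/negP => a0.
have b0 : 0 <= bb by exact: sqn_ge0.
set t := a / (a + bb).
have t0 : 0 <= t by rewrite /t divr_ge0 //; lra.
have t1 : t <= 1 by rewrite /t ler_pdivrMr; lra.
have St := poly_convex hS Sp Sy (l := t).
have St' : S ((1 - t) *: p + t *: y) by apply: St; rewrite t0 t1.
have := hp _ St'.
have -> : v - ((1 - t) *: p + t *: y) = (v - p) - t *: (y - p).
  by apply/matrixP => i j; rewrite !mxE; ring.
rewrite [sqn (_ - t *: _)]sqnB sqnZ dotZr -/a -/bb => h.
have : 2 * (t * a) <= t ^+ 2 * bb by lra.
rewrite /t => h2.
have ab : 0 < a + bb by lra.
move: h2; rewrite -(ler_pM2r ab) .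
have -> : 2 * (a / (a + bb) * a) * (a + bb) = 2 * a * a by field; lra.
have -> : (a / (a + bb)) ^+ 2 * bb * (a + bb) = a * a * (bb / (a + bb)) by field; lra.
have : bb / (a + bb) <= 1 by rewrite ler_pdivrMr; lra.
move=> hb hh.
have : 2 * a * a <= a * a by apply: le_trans hh _; rewrite ler_piMr // ?mulr_ge0 //; lra.
nra.
Qed.

End Proj.

Section Gen.
Variable R : realType.

Lemma dist2_le n (S : set 'cV[R]_n) u s : S s -> dist2 u S <= sqn (u - s).
Proof.
move=> Ss; apply: ge_inf; last by exists s.
by exists 0 => _ [t _ <-]; exact: sqn_ge0.
Qed.

Lemma dist2_ge0 n (S : set 'cV[R]_n) u : S !=set0 -> 0 <= dist2 u S.
Proof.
move=> [s Ss]; apply: lb_le_inf; first by exists (sqn (u - s)), s.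
by move=> _ [t _ <-]; exact: sqn_ge0.
Qed.

Lemma mask_entry a k (P : pred 'I_a) (M : 'M[R]_(a, k)) (x : 'cV[R]_k) i :
  ((\matrix_(i, j) (if P i then M i j else 0)) *m x) i 0
  = if P i then (M *m x) i 0 else 0.
Proof.
rewrite mxE; case: ifP => Pi.
  by rewrite mxE; apply: eq_bigr => j _; rewrite mxE Pi.
by apply: big1 => j _; rewrite mxE Pi mul0r.
Qed.

Lemma sqn_par k (u w : 'cV[R]_k) : sqn (u + w) <= 2 * sqn u + 2 * sqn w.
Proof.
have := sqn_ge0 (u - w); rewrite sqnB sqnD; lra.
Qed.

End Gen.

Section Main.
Variable R : realType.
Variables (m n p : nat) (Om1 Om2 : finType).
Variables (A : 'M[R]_(m, n)) (b : 'cV[R]_m) (C : 'M[R]_(p, n)) (d : 'cV[R]_p).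
Variables (blk1 : 'I_m -> Om1) (blk2 : 'I_p -> Om2).
Variables (P1 : Om1 -> R) (Y : set 'cV[R]_n) (delta beta : R).

Local Notation XS := (Xstar A b C d Y).

Lemma Cset_poly xi : polyhedral (Cset C d blk2 xi).
Proof.
exists p, (\matrix_(i, j) (if blk2 i == xi then C i j else 0)),
  (\col_i (if blk2 i == xi then d i 0 else 0)).
apply/seteqP; split => x /= hx i.
  by rewrite mask_entry mxE; case: eqP => // /hx.
by move=> e; have := hx i; rewrite mask_entry mxE e eqxx.
Qed.

Lemma XS_Aset z y : XS y -> Aset A b blk1 z y.
Proof.
move=> [_ [hy _]]; rewrite /Aset /=; apply/matrixP => i j.
by rewrite (ord1 j) mask_entry hy mxE.
Qed.

Lemma XS_Cset xi y : XS y -> Cset C d blk2 xi y.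
Proof. by move=> [_ [_ hy]] i _; exact: hy. Qed.

Lemma rate_facts : 0 < delta < 2 -> 0 < beta < 2 ->
  let mu := rate_min A blk1 P1 delta beta in
  let kap := kappa_block A blk1 P1 in
  [/\ 0 <= mu, mu * (4 * delta) <= 2 - delta, 2 * mu <= beta * (2 - beta)
    & mu * kap ^+ 2 * 2 <= delta * (2 - delta)].
Proof.
move=> /andP[d0 d2] /andP[b0 b2] mu kap.
have r1 : 0 < (2 - delta) / (4 * delta) by apply: divr_gt0; lra.
have r2 : 0 < beta * (2 - beta) / 2 by apply: divr_gt0 => //; nra.
set rest := Num.min ((2 - delta) / (4 * delta)) (beta * (2 - beta) / 2).
have hr0 : 0 <= rest by rewrite le_min !ltW.
have hr1 : rest <= (2 - delta) / (4 * delta) by rewrite ge_min lexx.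
have hr2 : rest <= beta * (2 - beta) / 2 by rewrite ge_min lexx orbT.
have g1 : forall u, 0 <= u -> u <= rest -> u * (4 * delta) <= 2 - delta.
  by move=> u u0 u1; rewrite -ler_pdivlMr ?(le_trans u1) //; lra.
have g2 : forall u, 0 <= u -> u <= rest -> 2 * u <= beta * (2 - beta).
  by move=> u u0 u1; rewrite mulrC -ler_pdivlMr ?(le_trans u1) //; lra.
rewrite /mu /rate_min -/kap -/rest; case: eqP => [k0|/eqP k0].
  split => //; [exact: g1 | exact: g2 | rewrite k0 expr0n mulr0 mul0r; nra].
have kp : 0 < kap ^+ 2 by rewrite exprn_gt0 // lt_def k0 /kap; apply: bigmax_ge_id.
have r3 : 0 < delta * (2 - delta) / (2 * kap ^+ 2) by apply: divr_gt0 => //; nra.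
set mm := Num.min _ _.
have m0 : 0 <= mm by rewrite le_min ltW.
have m1 : mm <= rest by rewrite ge_min lexx orbT.
split => //; [exact: g1 | exact: g2 |].
have : mm <= delta * (2 - delta) / (2 * kap ^+ 2) by rewrite ge_min lexx.
have hk2 : 0 < 2 * kap ^+ 2 by rewrite mulr_gt0.
have e : mm * kap ^+ 2 * 2 = mm * (2 * kap ^+ 2) by ring.
by rewrite e ler_pdivlMr.
Qed.

End Main.

Section Step.
Variable R : realType.
Variables (m n p : nat) (Om1 Om2 : finType).
Variables (A : 'M[R]_(m, n)) (b : 'cV[R]_m) (C : 'M[R]_(p, n)) (d : 'cV[R]_p).
Variables (blk1 : 'I_m -> Om1) (blk2 : 'I_p -> Om2).
Variables (P1 : Om1 -> R) (Y : set 'cV[R]_n) (delta beta : R).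

Local Notation XS := (Xstar A b C d Y).

Lemma one_step z xi (x y : 'cV[R]_n) :
  polyhedral Y -> XS y -> 0 < P1 z -> 0 < delta < 2 -> 0 < beta < 2 ->
  sqn (ssp_step A b C d blk1 blk2 Y delta beta z xi x - y) <=
  sqn (x - y) - rate_min A blk1 P1 delta beta *
     (dist2 x (Aset A b blk1 z) + dist2 x (Cset C d blk2 xi)).
Proof.
move=> hY XSy hz hd hb.
have [d0 d2] : 0 < delta /\ delta < 2 by move/andP: hd.
have [b0 b2] : 0 < beta /\ beta < 2 by move/andP: hb.
have Yy : Y y by case: XSy.
have Yne : Y !=set0 by exists y.
have Cne : Cset C d blk2 xi !=set0 by exists y; exact: (XS_Cset (xi:=xi) XSy).
rewrite /ssp_step /=.
set Mz := Ablk A blk1 z; set bz := bblk b blk1 z.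
set r := Mz *m x - bz; set g := Mz^T *m r.
set al := delta * sqn r / sqn g.
set v := x - al *: g.
set pC := proj (Cset C d blk2 xi) v.
set zz := (1 - beta) *: v + beta *: pC.
set xp := proj Y zz.
have My : Mz *m y = bz by have := XS_Aset blk1 z XSy.
have er : r = Mz *m (x - y) by rewrite mulmxBr My.
have hc : dot (x - y) g = sqn r by rewrite /g -dot_tr -er sqnE.
set T := sqn r ^+ 2 / sqn g.
have T0 : 0 <= T by rewrite /T divr_ge0 ?exprn_ge0 ?sqn_ge0.
have [hv1 hv2] : sqn (v - y) = sqn (x - y) - delta * (2 - delta) * T /\
                 sqn (x - v) = delta ^+ 2 * T.
  have e1 : v - y = (x - y) - al *: g by apply/matrixP => i j; rewrite !mxE; ring.
  have e2 : x - v = al *: g by apply/matrixP => i j; rewrite !mxE; ring.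
  rewrite e1 e2 [sqn (_ - al *: _)]sqnB !sqnZ dotZr hc /al /T.
  case: (eqVneq (sqn g) 0) => g0.
    by rewrite g0 invr0; split; ring.
  by split; field.
have hg : sqn g <= opnorm Mz ^+ 2 * sqn r.
  have e : sqn g = dot r (Mz *m g).
    by have := dot_tr Mz^T r g; rewrite trmxK -/g => <-; exact: sqnE.
  have cs := CS r (Mz *m g); rewrite -e in cs.
  have ob := opnorm_bound Mz g.
  have := sqn_ge0 r; have := opnorm_ge0 Mz.
  case: (eqVneq (sqn g) 0) => g0.
    by rewrite g0 => ? ?; rewrite mulr_ge0 ?exprn_ge0.
  have gp : 0 < sqn g by rewrite lt_def g0 sqn_ge0.
  move=> o0 r0; rewrite -(ler_pM2r gp).
  apply: le_trans (_ : sqn g ^+ 2 <= _); first by rewrite expr2.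
  apply: le_trans cs _; apply: le_trans (ler_wpM2l (sqn_ge0 r) ob) _.
  by rewrite le_eqVlt; apply/orP; left; apply/eqP; ring.
have hr : sqn r <= opnorm Mz ^+ 2 * T.
  case: (eqVneq (sqn g) 0) => g0.
    have g00 := sqn_eq0 g0; rewrite g00 dotC dot0l in hc.
    by rewrite -hc mulr_ge0 ?exprn_ge0 ?opnorm_ge0.
  have gp : 0 < sqn g by rewrite lt_def g0 sqn_ge0.
  rewrite /T mulrA ler_pdivlMr //.
  have := sqn_ge0 r; move: hg; nra.
have hA : dist2 x (Aset A b blk1 z) <= kappa_block A blk1 P1 ^+ 2 * T.
  set X := pinv Mz.
  have [h1 _ _ _] := pinvP Mz.
  have inA : Aset A b blk1 z (x - X *m r).
    rewrite /Aset /= -/Mz -/bz mulmxBr mulmxA.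
    by rewrite er mulmxA h1 mulmxBr My opprB addrC subrK.
  apply: le_trans (dist2_le x inA) _.
  have -> : x - (x - X *m r) = X *m r by rewrite opprB addrC subrK.
  apply: le_trans (opnorm_bound X r) _.
  have hk : opnorm Mz * opnorm X <= kappa_block A blk1 P1.
    by rewrite /kappa_block; apply: le_bigmax_cond.
  have o1 := opnorm_ge0 Mz; have o2 := opnorm_ge0 X.
  have hk2 : (opnorm Mz * opnorm X) ^+ 2 <= kappa_block A blk1 P1 ^+ 2.
    have := mulr_ge0 o1 o2; move: hk; nra.
  apply: le_trans (_ : opnorm X ^+ 2 * (opnorm Mz ^+ 2 * T) <= _).
    by apply: ler_wpM2l => //; rewrite exprn_ge0.
  by rewrite mulrA -exprMn [opnorm X * _]mulrC; apply: ler_wpM2r.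
have [pCin _] := projP v (Cset_poly C d blk2 xi) Cne.
have ob1 := proj_obtuse v (Cset_poly C d blk2 xi) Cne (XS_Cset (xi:=xi) XSy).
rewrite -/pC in pCin ob1.
have hz1 : sqn (zz - y) <= sqn (v - y) - beta * (2 - beta) * sqn (v - pC).
  have e : zz - y = (v - y) - beta *: (v - pC).
    by apply/matrixP => i j; rewrite !mxE; ring.
  have e2 : dot (v - y) (v - pC) = sqn (v - pC) - dot (v - pC) (y - pC).
    have -> : v - y = (v - pC) - (y - pC) by apply/matrixP => i j; rewrite !mxE; ring.
    by rewrite dotBl sqnE dotC.
  rewrite e [sqn (_ - beta *: _)]sqnB sqnZ dotZr e2; nra.
have [xpin _] := projP zz hY Yne.
have ob2 := proj_obtuse zz hY Yne Yy.
rewrite -/xp in xpin ob2.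
have hx1 : sqn (xp - y) <= sqn (zz - y).
  have e : zz - y = (zz - xp) + (xp - y) by apply/matrixP => i j; rewrite !mxE; ring.
  have e2 : dot (zz - xp) (xp - y) = - dot (zz - xp) (y - xp).
    by rewrite -dotNr opprB.
  rewrite e [sqn (_ + (xp - y))]sqnD e2; have := sqn_ge0 (zz - xp); lra.
have hCd : dist2 x (Cset C d blk2 xi) <= 2 * (delta ^+ 2 * T) + 2 * sqn (v - pC).
  apply: le_trans (dist2_le x pCin) _.
  have -> : x - pC = (x - v) + (v - pC) by apply/matrixP => i j; rewrite !mxE; ring.
  by rewrite -hv2; exact: sqn_par.
have [mu0 mu1 mu2 mu3] := rate_facts A blk1 P1 hd hb.
set mu := rate_min A blk1 P1 delta beta in mu0 mu1 mu2 mu3 *.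
set kap := kappa_block A blk1 P1 in mu3 hA.
set E := sqn (v - pC) in hz1 hCd.
have E0 : 0 <= E by exact: sqn_ge0.
have dA0 : 0 <= dist2 x (Aset A b blk1 z).
  by apply: dist2_ge0; exists y; exact: (XS_Aset blk1 z XSy).
have dC0 : 0 <= dist2 x (Cset C d blk2 xi) by exact: dist2_ge0.
have f1 : mu * dist2 x (Aset A b blk1 z) <= delta * (2 - delta) / 2 * T.
  apply: le_trans (_ : mu * (kap ^+ 2 * T) <= _); first exact: ler_wpM2l.
  rewrite mulrA; apply: ler_wpM2r => //; lra.
have f2 : mu * dist2 x (Cset C d blk2 xi)
          <= delta * (2 - delta) / 2 * T + beta * (2 - beta) * E.
  apply: le_trans (_ : mu * (2 * (delta ^+ 2 * T) + 2 * E) <= _); first exact: ler_wpM2l.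
  have g1 : mu * (2 * delta ^+ 2) <= delta * (2 - delta) / 2.
    have : mu * (4 * delta) * delta <= (2 - delta) * delta by apply: ler_wpM2r => //; lra.
    lra.
  have := ler_wpM2r T0 g1; have := ler_wpM2r E0 mu2; nra.
have := le_trans hx1 hz1; rewrite hv1; lra.
Qed.

End Step.

Lemma sum2_id (R : realType) (I J : finType) (P : I -> R) (Q : J -> R) (K mu : R)
  (a : I -> R) (bq : J -> R) :
  \sum_i P i = 1 -> \sum_j Q j = 1 ->
  \sum_i \sum_j P i * Q j * (K - mu * (a i + bq j))
  = K - mu * (\sum_i P i * a i + \sum_j Q j * bq j).
Proof.
move=> hP hQ.
set W := \sum_j Q j * bq j.
have e : forall i, \sum_j P i * Q j * (K - mu * (a i + bq j))
                   = P i * K - mu * (P i * a i) - mu * P i * W.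
  move=> i.
  transitivity (\sum_j (Q j * (P i * K - mu * (P i * a i)) - mu * P i * (Q j * bq j))).
    by apply: eq_bigr => j _; ring.
  by rewrite sumrB -mulr_suml hQ mul1r -mulr_sumr.
under eq_bigr do rewrite e.
rewrite !sumrB.
have t1 : \sum_i P i * K = K by rewrite -mulr_suml hP mul1r.
have t2 : \sum_i mu * (P i * a i) = mu * \sum_i P i * a i by rewrite mulr_sumr.
have t3 : \sum_i mu * P i * W = mu * W by rewrite -mulr_suml -mulr_sumr hP mulr1.
rewrite t1 t2 t3; ring.
Qed.

Section Fin.
Variable R : realType.
Variables (m n p : nat) (Om1 Om2 : finType).
Variables (A : 'M[R]_(m, n)) (b : 'cV[R]_m) (C : 'M[R]_(p, n)) (d : 'cV[R]_p).
Variables (blk1 : 'I_m -> Om1) (blk2 : 'I_p -> Om2).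
Variables (P1 : Om1 -> R) (P2 : Om2 -> R) (Y : set 'cV[R]_n) (c delta beta : R).

Local Notation XS := (Xstar A b C d Y).
Local Notation step := (ssp_step A b C d blk1 blk2 Y delta beta).
Local Notation mu := (rate_min A blk1 P1 delta beta).

Hypotheses (hP1 : forall z, 0 <= P1 z) (sP1 : \sum_z P1 z = 1)
  (hP2 : forall xi, 0 <= P2 xi) (sP2 : \sum_xi P2 xi = 1)
  (hY : polyhedral Y) (hX : XS !=set0) (c0 : 0 < c)
  (hH : forall u, Y u ->
     dist2 u XS <=
       c * (\sum_z P1 z * dist2 u (Aset A b blk1 z)
            + \sum_xi P2 xi * dist2 u (Cset C d blk2 xi)))
  (hd : 0 < delta < 2) (hb : 0 < beta < 2).

Lemma Yne : Y !=set0.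
Proof. by case: hX => y [Yy _]; exists y. Qed.

Lemma step_Y z xi x : Y (step z xi x).
Proof. by rewrite /ssp_step /=; exact: (projP _ hY Yne).1. Qed.

Lemma exp_step x : Y x ->
  \sum_z \sum_xi P1 z * P2 xi * dist2 (step z xi x) XS
  <= (1 - c^-1 * mu) * dist2 x XS.
Proof.
move=> Yx.
set D := dist2 x XS.
set S := \sum_z _.
have [mu0 _ _ _] := rate_facts A blk1 P1 hd hb.
suff : S + c^-1 * mu * D <= D by lra.
case: (hX) => y0 Xy0.
apply: lb_le_inf; first by exists (sqn (x - y0)), y0.
move=> _ [y XSy <-].
set dA := fun z => dist2 x (Aset A b blk1 z).
set dC := fun xi => dist2 x (Cset C d blk2 xi).
have h1 : S <= \sum_z \sum_xi P1 z * P2 xi * (sqn (x - y) - mu * (dA z + dC xi)).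
  apply: ler_sum => z _; apply: ler_sum => xi _.
  have [pz|pz] := eqVneq (P1 z) 0; first by rewrite pz !mul0r.
  have pzp : 0 < P1 z by rewrite lt_def pz hP1.
  apply: ler_wpM2l; first by rewrite mulr_ge0.
  apply: le_trans (dist2_le _ XSy) _.
  exact: one_step.
rewrite sum2_id // in h1.
have h3 : c^-1 * D <= \sum_z P1 z * dA z + \sum_xi P2 xi * dC xi.
  by rewrite ler_pdivrMl //; exact: hH.
have := ler_wpM2l mu0 h3.
move: h1; lra.
Qed.

Lemma main_ind k x : Y x ->
  exp_dist2 A b C d blk1 blk2 Y delta beta P1 P2 k x
  <= (1 - c^-1 * mu) ^+ k * dist2 x XS.
Proof.
elim: k x => [|k IH] x Yx /=; first by rewrite expr0 mul1r.
set q := 1 - c^-1 * mu.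
set S := \sum_z \sum_xi P1 z * P2 xi * dist2 (step z xi x) XS.
have hle : \sum_z \sum_xi P1 z * P2 xi *
        exp_dist2 A b C d blk1 blk2 Y delta beta P1 P2 k (step z xi x) <=
    \sum_z \sum_xi P1 z * P2 xi * (q ^+ k * dist2 (step z xi x) XS).
  apply: ler_sum => z _; apply: ler_sum => xi _.
  by apply: ler_wpM2l; [rewrite mulr_ge0 | exact: IH (step_Y _ _ _)].
apply: le_trans hle _.
have -> : \sum_z \sum_xi P1 z * P2 xi * (q ^+ k * dist2 (step z xi x) XS) = q ^+ k * S.
  rewrite /S mulr_sumr; apply: eq_bigr => z _; rewrite mulr_sumr.
  by apply: eq_bigr => xi _; ring.
have hS := exp_step Yx; rewrite -/q -/S in hS.
have S0 : 0 <= S.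
  apply: sumr_ge0 => z _; apply: sumr_ge0 => xi _.
  by rewrite !mulr_ge0 // dist2_ge0.
have D0 : 0 <= dist2 x XS by exact: dist2_ge0.
rewrite exprSr -mulrA.
have [q0|q0] := lerP 0 q.
  by apply: ler_wpM2l => //; rewrite exprn_ge0.
have eD : dist2 x XS = 0.
  by apply/eqP; rewrite eq_le D0 andbT; move: hS S0; nra.
have eS : S = 0 by apply/eqP; rewrite eq_le S0 andbT; move: hS; rewrite eD mulr0.
by rewrite eS eD !mulr0.
Qed.

End Fin.

Theorem theorem7 (R : realType) (m n p : nat) (Om1 Om2 : finType)
  (A : 'M[R]_(m, n)) (b : 'cV[R]_m) (C : 'M[R]_(p, n)) (d : 'cV[R]_p)
  (blk1 : 'I_m -> Om1) (blk2 : 'I_p -> Om2)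
  (P1 : Om1 -> R) (P2 : Om2 -> R) (Y : set 'cV[R]_n) (c delta beta : R)
  (x0 : 'cV[R]_n) :
  (forall z, 0 <= P1 z) -> \sum_z P1 z = 1 ->
  (forall xi, 0 <= P2 xi) -> \sum_xi P2 xi = 1 ->
  polyhedral Y ->
  Xstar A b C d Y !=set0 ->
  0 < c ->
  (forall u, Y u ->
     dist2 u (Xstar A b C d Y) <=
       c * (\sum_z P1 z * dist2 u (Aset A b blk1 z)
            + \sum_xi P2 xi * dist2 u (Cset C d blk2 xi))) ->
  0 < delta < 2 -> 0 < beta < 2 ->
  Y x0 ->
  forall k : nat,
    exp_dist2 A b C d blk1 blk2 Y delta beta P1 P2 k x0
      <= (1 - c^-1 * rate_min A blk1 P1 delta beta) ^+ k * dist2 x0 (Xstar A b C d Y).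
Proof.
move=> hP1 sP1 hP2 sP2 hY hX c0 hH hd hb Yx0 k.
exact: (main_ind hP1 sP1 hP2 sP2 hY hX c0 hH hd hb k Yx0).
Qed.
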